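(* A liner $X$ with $|X|>2$ is hyper-Bolyai if and only if $X$ is $3$-long, hyperaffine, and $3$-ranked.
   Context: A liner is a set $X$ of points with a family of subsets called lines such that any two distinct points lie in a unique line and every line contains at least two points. For distinct $x,y$, $\overline{xy}$ is the line through them and $\overline{xx}:=\{x\}$. A set is flat if it contains $\overline{xy}$ for all its distinct points; $\overline A$ is the smallest flat containing $A$; the rank $\|A\|$ is the smallest cardinality of $B\subseteq X$ with $A\subseteq\overline B$; a plane is a flat of rank 3. A flat $A$ is subparallel to a flat $B$ if $A\subseteq\overline{\{a\}\cup B}$ for every $a\in A$; $A\parallel B$ means each is subparallel to the other. $X$ is hyper-Bolyai if for any plane $P\subseteq X$, concurrent (i.e. distinct and intersecting) lines $A,B\subseteq P$ and point $p\in P\setminus B$, there is a line $\Lambda$ with $p\in\Lambda$, $\Lambda\parallel B$ and $|\Lambda\cap A|=1$. $X$ is $3$-long if every line has at least $3$ points. $X$ is hyperaffine if for all $o,x,y\in X$ and $p\in\overline{xy}\setminus\overline{ox}$ there exists $u\in\overline{oy}$ with $\overline{up}\cap\overline{ox}=\varnothing$. $X$ is $3$-ranked if any flats $A\subseteq B$ with $\|A\|=\|B\|\le3$ are equal. *)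

(* Defs.v *)
From Stdlib Require Import List.
Import ListNotations.

Section Liners.
Variable X : Type.
Variable is_line : (X -> Prop) -> Prop.

Definition subset (A B : X -> Prop) := forall z, A z -> B z.

Definition is_liner : Prop :=
  (forall x y, x <> y -> exists L, is_line L /\ L x /\ L y) /\
  (forall x y L1 L2, x <> y -> is_line L1 -> is_line L2 ->
     L1 x -> L1 y -> L2 x -> L2 y -> forall z, L1 z <-> L2 z) /\
  (forall L, is_line L -> exists x y, x <> y /\ L x /\ L y).

(* \overline{xy}: the line through x,y if x <> y, and {x} if x = y *)
Definition lineThrough (x y : X) : X -> Prop :=
  fun z => z = x \/ (x <> y /\ exists L, is_line L /\ L x /\ L y /\ L z).

Definition flat (A : X -> Prop) : Prop :=
  forall x y, A x -> A y -> x <> y -> subset (lineThrough x y) A.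

Definition closure (A : X -> Prop) : X -> Prop :=
  fun z => forall F, flat F -> subset A F -> F z.

Definition of_list (B : list X) : X -> Prop := fun z => In z B.

Definition has_rank (A : X -> Prop) (n : nat) : Prop :=
  (exists B : list X, NoDup B /\ length B = n /\ subset A (closure (of_list B))) /\
  (forall B : list X, length B < n -> ~ subset A (closure (of_list B))).

Definition plane (P : X -> Prop) : Prop := flat P /\ has_rank P 3.

Definition subparallel (A B : X -> Prop) : Prop :=
  forall a, A a -> subset A (closure (fun z => z = a \/ B z)).

Definition parallel (A B : X -> Prop) : Prop :=
  subparallel A B /\ subparallel B A.

Definition concurrent (A B : X -> Prop) : Prop :=
  (exists z, A z /\ ~ B z \/ B z /\ ~ A z) /\ (exists z, A z /\ B z).

Definition hyper_Bolyai : Prop :=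
  forall P A B p, plane P -> is_line A -> is_line B ->
    subset A P -> subset B P -> concurrent A B -> P p -> ~ B p ->
    exists Lam, is_line Lam /\ Lam p /\ parallel Lam B /\
      exists z, (Lam z /\ A z) /\ forall w, Lam w /\ A w -> w = z.

Definition three_long : Prop :=
  forall L, is_line L -> exists a b c, L a /\ L b /\ L c /\
    a <> b /\ a <> c /\ b <> c.

Definition hyperaffine : Prop :=
  forall o x y p, lineThrough x y p -> ~ lineThrough o x p ->
    exists u, lineThrough o y u /\
      forall z, ~ (lineThrough u p z /\ lineThrough o x z).

Definition three_ranked : Prop :=
  forall A B, flat A -> flat B -> subset A B ->
    forall n, n <= 3 -> has_rank A n -> has_rank B n -> forall z, A z <-> B z.

End Liners.

(* Main.v *)
Require Import Defs.
From Stdlib Require Import List Classical Lia.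
Import ListNotations.

Arguments subset {X}.
Arguments lineThrough {X} is_line x y _.
Arguments flat {X} is_line A.
Arguments closure {X} is_line A _.
Arguments of_list {X} B _.
Arguments has_rank {X} is_line A n.
Arguments plane {X} is_line P.
Arguments subparallel {X} is_line A B.
Arguments parallel {X} is_line A B.
Arguments concurrent {X} A B.


Lemma lt_xx {X} (il : (X -> Prop) -> Prop) x z : lineThrough il x x z <-> z = x.
Proof. unfold lineThrough; split; [intros [H|[H _]]; [auto|congruence] | auto]. Qed.

Lemma lt_l {X} (il : (X -> Prop) -> Prop) x y : lineThrough il x y x.
Proof. left; auto. Qed.

Lemma lt_r {X} (il : (X -> Prop) -> Prop) (HX : is_liner X il) x y : lineThrough il x y y.
Proof.
  destruct (classic (x = y)) as [->|H]; [left; auto|].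
  destruct HX as [H1 _]. destruct (H1 x y H) as [L [HL [Lx Ly]]].
  right; split; auto; exists L; auto.
Qed.

Lemma lt_line {X} (il : (X -> Prop) -> Prop) (HX : is_liner X il) x y K :
  x <> y -> il K -> K x -> K y -> forall z, lineThrough il x y z <-> K z.
Proof.
  intros Hxy HK Kx Ky z. destruct HX as [_ [H2 _]]. split.
  - intros [->|[_ [L [HL [Lx [Ly Lz]]]]]]; auto.
    apply (H2 x y L K Hxy HL HK Lx Ly Kx Ky); auto.
  - intros Kz. right; split; auto. exists K; auto.
Qed.

Lemma line_ex {X} (il : (X -> Prop) -> Prop) (HX : is_liner X il) x y :
  x <> y -> exists K, il K /\ forall z, K z <-> lineThrough il x y z.
Proof.
  intros Hxy. pose proof HX as [H1 _]. destruct (H1 x y Hxy) as [L [HL [Lx Ly]]].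
  exists L; split; auto. intros z; symmetry; apply (lt_line il HX); auto.
Qed.

Lemma line_two {X} (il : (X -> Prop) -> Prop) (HX : is_liner X il) K :
  il K -> exists x y, x <> y /\ K x /\ K y.
Proof. intros HK. destruct HX as [_ [_ H3]]. auto. Qed.

Lemma line_flat {X} (il : (X -> Prop) -> Prop) (HX : is_liner X il) K :
  il K -> flat il K.
Proof.
  intros HK x y Kx Ky Hxy z Hz. apply (lt_line il HX x y K); auto.
Qed.

Lemma flat_lt {X} (il : (X -> Prop) -> Prop) F a b :
  flat il F -> F a -> F b -> subset (lineThrough il a b) F.
Proof.
  intros HF Fa Fb z Hz. destruct (classic (a = b)) as [<-|H].
  - apply lt_xx in Hz; subst; auto.
  - apply (HF a b); auto.
Qed.

Lemma closure_sub {X} (il : (X -> Prop) -> Prop) F A :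
  flat il F -> subset A F -> subset (closure il A) F.
Proof. intros HF HA z Hz. apply Hz; auto. Qed.

Lemma sub_closure {X} (il : (X -> Prop) -> Prop) A : subset A (closure il A).
Proof. intros z Az F HF HA. apply HA; auto. Qed.

Lemma closure_flat {X} (il : (X -> Prop) -> Prop) A : flat il (closure il A).
Proof.
  intros x y Hx Hy Hxy z Hz F HF HA. apply (HF x y); auto.
  - apply Hx; auto.
  - apply Hy; auto.
Qed.

Lemma flat_ext {X} (il : (X -> Prop) -> Prop) F G :
  (forall z, F z <-> G z) -> flat il F -> flat il G.
Proof.
  intros E HF x y Gx Gy Hxy z Hz. apply E. apply (HF x y); try apply E; auto.
Qed.

Lemma lt_flat {X} (il : (X -> Prop) -> Prop) (HX : is_liner X il) a b :
  flat il (lineThrough il a b).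
Proof.
  destruct (classic (a = b)) as [<-|H].
  - intros x y Hx Hy Hxy. apply lt_xx in Hx; apply lt_xx in Hy; congruence.
  - destruct (line_ex il HX a b H) as [K [HK E]].
    apply (flat_ext il K); auto. apply (line_flat il HX); auto.
Qed.

Lemma lt_sym {X} (il : (X -> Prop) -> Prop) (HX : is_liner X il) x y z :
  lineThrough il x y z -> lineThrough il y x z.
Proof.
  intros H. destruct (classic (x = y)) as [<-|Hxy]; auto.
  destruct (line_ex il HX x y Hxy) as [K [HK E]].
  apply (lt_line il HX y x K); auto.
  - apply E, (lt_r il HX).
  - apply E, lt_l.
  - apply E; auto.
Qed.

Lemma lt_eq {X} (il : (X -> Prop) -> Prop) (HX : is_liner X il) x y a b :
  a <> b -> lineThrough il x y a -> lineThrough il x y b ->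
  forall z, lineThrough il a b z <-> lineThrough il x y z.
Proof.
  intros Hab Ha Hb. destruct (classic (x = y)) as [<-|Hxy].
  - apply lt_xx in Ha; apply lt_xx in Hb; congruence.
  - destruct (line_ex il HX x y Hxy) as [K [HK E]].
    intros z. rewrite (lt_line il HX a b K); auto; try apply E; auto.
Qed.

Definition nc {X} (il : (X -> Prop) -> Prop) a b c := a <> b /\ ~ lineThrough il a b c.

Lemma closure_small {X} (il : (X -> Prop) -> Prop) (HX : is_liner X il) (B : list X) (w : X) :
  length B < 3 -> exists u v, subset (closure il (of_list B)) (lineThrough il u v).
Proof.
  intros HB. destruct B as [|u [|v [|t B]]]; simpl in HB.
  - exists w, w. intros z Hz. exfalso.
    apply (Hz (fun _ => False)); [intros ? ? [] |intros ? []].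
  - exists u, u. apply closure_sub; [apply (lt_flat il HX)|].
    intros z [<-|[]]. apply lt_l.
  - exists u, v. apply closure_sub; [apply (lt_flat il HX)|].
    intros z [<-|[<-|[]]]; [apply lt_l| apply (lt_r il HX)].
  - lia.
Qed.

Lemma not_in_small {X} (il : (X -> Prop) -> Prop) (HX : is_liner X il) a b c u v :
  nc il a b c -> lineThrough il u v a -> lineThrough il u v b -> lineThrough il u v c -> False.
Proof.
  intros [Hab Hc] Ha Hb Hcc. apply Hc. apply (lt_eq il HX u v a b); auto.
Qed.

Lemma has_rank3_intro {X} (il : (X -> Prop) -> Prop) (HX : is_liner X il) F a b c :
  F a -> F b -> F c -> nc il a b c -> subset F (closure il (of_list [a;b;c])) ->
  has_rank il F 3.
Proof.
  intros Fa Fb Fc Hn HS. split.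
  - exists [a;b;c]. split; [|split; auto].
    destruct Hn as [Hab Hc].
    assert (a <> c) by (intros <-; apply Hc, lt_l).
    assert (b <> c) by (intros <-; apply Hc, (lt_r il HX)).
    repeat constructor; simpl; intuition.
  - intros B HB HS'. destruct (closure_small il HX B a HB) as [u [v Huv]].
    apply (not_in_small il HX a b c u v Hn); apply Huv, HS'; auto.
Qed.

Lemma not_subset {X} (A B : X -> Prop) : ~ subset A B -> exists z, A z /\ ~ B z.
Proof.
  intros H. apply NNPP; intros H'. apply H; intros z Az.
  apply NNPP; intros Bz. apply H'; eauto.
Qed.

Lemma rank3_nc {X} (il : (X -> Prop) -> Prop) (HX : is_liner X il) F :
  has_rank il F 3 -> exists a b c, F a /\ F b /\ F c /\ nc il a b c.
Proof.
  intros [_ H].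
  destruct (not_subset _ _ (H [] ltac:(simpl; lia))) as [a [Fa _]].
  destruct (not_subset _ _ (H [a] ltac:(simpl; lia))) as [b [Fb Hb]].
  destruct (not_subset _ _ (H [a;b] ltac:(simpl; lia))) as [c [Fc Hc]].
  exists a, b, c. repeat split; auto.
  - intros <-. apply Hb, sub_closure; left; auto.
  - intros Hl. apply Hc. revert Hl. apply flat_lt; [apply closure_flat| |];
    apply sub_closure; simpl; auto.
Qed.

Lemma meet_sub {X} (il : (X -> Prop) -> Prop) (HX : is_liner X il) L B z :
  subparallel il L B -> il B -> L z -> B z -> subset L B.
Proof.
  intros HP HB Lz Bz w Lw. apply (closure_sub il B (fun t => t = z \/ B t)).
  - apply (line_flat il HX); auto.
  - intros t [->|Ht]; auto.
  - apply (HP z Lz); auto.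
Qed.

Lemma plane3 {X} (il : (X -> Prop) -> Prop) (HX : is_liner X il) a b c :
  nc il a b c -> plane il (closure il (of_list [a;b;c])).
Proof.
  intros Hn. split; [apply closure_flat|].
  apply (has_rank3_intro il HX _ a b c); try (apply sub_closure; simpl; tauto); auto.
  intros z Hz; auto.
Qed.

Lemma disj_par {X} (il : (X -> Prop) -> Prop) (HX : is_liner X il)
  (Hr : three_ranked X il) P K1 K2 :
  plane il P -> il K1 -> il K2 -> subset K1 P -> subset K2 P ->
  (forall z, K1 z -> K2 z -> False) -> subparallel il K1 K2.
Proof.
  intros [fP rP] H1 H2 S1 S2 D l Kl.
  destruct (line_two il HX K2 H2) as [b1 [b2 [Hb [B1 B2]]]].
  set (F := closure il (fun z => z = l \/ K2 z)).
  assert (E2 : forall z, K2 z <-> lineThrough il b1 b2 z)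
    by (intros z; symmetry; apply (lt_line il HX); auto).
  assert (HFP : subset F P).
  { apply closure_sub; auto. intros z [->|Hz]; auto. }
  assert (rF : has_rank il F 3).
  { apply (has_rank3_intro il HX F b1 b2 l); try (apply sub_closure; auto; fail).
    - split; auto. intros Hl. apply (D l); auto. apply E2; auto.
    - apply closure_sub; [apply closure_flat|].
      intros z [->|Hz]; [apply sub_closure; simpl; tauto|].
      apply E2 in Hz. revert Hz. apply flat_lt; [apply closure_flat| |];
      apply sub_closure; simpl; tauto. }
  intros z Hz. apply (Hr F P (closure_flat il _) fP HFP 3 (le_n 3) rF rP z).
  apply S1; auto.
Qed.

Lemma finish {X} (il : (X -> Prop) -> Prop) (HX : is_liner X il)
  (Hr : three_ranked X il) P A B o p u c :
  plane il P -> il A -> il B -> subset A P -> subset B P -> A o -> B o ->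
  u <> p -> P u -> P p -> (forall z, ~ (lineThrough il u p z /\ B z)) ->
  lineThrough il u p c -> A c ->
  exists Lam, il Lam /\ Lam p /\ parallel il Lam B /\
      exists z, (Lam z /\ A z) /\ forall w, Lam w /\ A w -> w = z.
Proof.
  intros hP hA hB sA sB Ao Bo Hup Pu Pp D Lc Ac.
  destruct (line_ex il HX u p Hup) as [K [HK E]].
  assert (SK : subset K P).
  { intros z Hz. apply E in Hz. revert Hz. apply flat_lt; auto. apply hP. }
  exists K. split; auto. split; [apply E, (lt_r il HX)|]. split.
  - split; apply (disj_par il HX Hr P); auto.
    + intros z Kz Bz. apply (D z); split; auto; apply E; auto.
    + intros z Bz Kz. apply (D z); split; auto; apply E; auto.
  - exists c. split; [split; auto; apply E; auto|].
    intros w [Kw Aw]. apply NNPP; intros Hwc.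
    assert (Ko : K o).
    { destruct HX as [_ [H2 _]]. apply (H2 w c A K Hwc hA HK Aw Ac Kw); auto. apply E; auto. }
    apply (D o); split; auto. apply E; auto.
Qed.

Lemma backward {X} (il : (X -> Prop) -> Prop) (HX : is_liner X il) :
  three_long X il -> hyperaffine X il -> three_ranked X il -> hyper_Bolyai X il.
Proof.
  intros Hl Ha Hr P A B p hP hA hB sA sB [[w Hw] [o [Ao Bo]]] Pp nBp.
  assert (U : forall z, A z -> B z -> z = o).
  { intros z Az Bz. apply NNPP; intros Hzo.
    destruct HX as [_ [H2 _]].
    destruct Hw as [[Aw Bw]|[Bw Aw]]; [apply Bw|apply Aw];
      apply (H2 z o A B Hzo hA hB Az Ao Bz Bo); auto. }
  assert (EB : forall x, x <> o -> B x -> forall z, B z <-> lineThrough il o x z).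
  { intros x Hx Bx z. symmetry. apply (lt_line il HX); auto. }
  assert (fP : flat il P) by apply hP.
  destruct (classic (A p)) as [Ap|nAp].
  - assert (Hpo : p <> o) by (intros ->; auto).
    destruct (line_two il HX B hB) as [x1 [x2 [Hx [B1 B2]]]].
    assert (exists x, B x /\ x <> o) as [x [Bx Hxo]].
    { destruct (classic (x1 = o)) as [->|H]; eauto. }
    assert (Hxp : x <> p) by (intros ->; auto).
    destruct (line_ex il HX x p Hxp) as [K [HK EK]].
    destruct (Hl K HK) as [a1 [a2 [a3 [K1 [K2 [K3 [D12 [D13 D23]]]]]]]].
    assert (exists y, K y /\ y <> x /\ y <> p) as [y [Ky [Hyx Hyp]]].
    { destruct (classic (a1 <> x /\ a1 <> p)) as [[]|H1]; [exists a1; auto|].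
      destruct (classic (a2 <> x /\ a2 <> p)) as [[]|H2]; [exists a2; auto|].
      exists a3. apply not_and_or in H1; apply not_and_or in H2.
      destruct H1 as [H1|H1]; apply NNPP in H1; destruct H2 as [H2|H2]; apply NNPP in H2;
      subst; repeat split; congruence. }
    apply EK in Ky.
    assert (Hxy : lineThrough il x y p).
    { apply (lt_eq il HX x p x y); auto; [apply lt_l | apply (lt_r il HX)]. }
    assert (Hnox : ~ lineThrough il o x p) by (intros H; apply nBp, (EB x); auto).
    destruct (Ha o x y p Hxy Hnox) as [u [Hu D]].
    assert (Py : P y) by (revert Ky; apply flat_lt; auto).
    assert (Pu : P u) by (revert Hu; apply flat_lt; auto).
    assert (Hup : u <> p).
    { intros ->. destruct (classic (o = y)) as [<-|Hoy].
      - apply lt_xx in Hu. congruence.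
      - assert (Ay : A y).
        { apply (lt_line il HX o p A); auto.
          apply (lt_eq il HX o y o p); auto; [apply lt_l | apply (lt_r il HX)]. }
        assert (Ax : A x).
        { assert (E1 : forall z, lineThrough il y p z <-> lineThrough il x p z)
            by (apply (lt_eq il HX); auto; apply (lt_r il HX)).
          apply (lt_line il HX y p A); auto. apply E1, lt_l. }
        apply Hxo, U; auto. }
    apply (finish il HX Hr P A B o p u p); auto.
    + intros z [Hz Bz]. apply (D z). split; auto. apply (EB x); auto.
    + apply (lt_r il HX).
  - destruct (line_two il HX A hA) as [x1 [x2 [Hx [A1 A2]]]].
    assert (exists z, A z /\ z <> o) as [z [Az Hzo]].
    { destruct (classic (x1 = o)) as [->|H]; eauto. }
    assert (Hzp : z <> p) by (intros ->; auto).
    assert (Pz : P z) by auto.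
    destruct (classic (exists x, lineThrough il z p x /\ B x)) as [[x [Kx Bx]]|Hno].
    + assert (Hxo : x <> o).
      { intros ->. apply nAp. apply (lt_line il HX z o A); auto.
        apply (lt_eq il HX z p z o); auto; [apply lt_l | apply (lt_r il HX)]. }
      assert (Hxz : x <> z) by (intros ->; auto).
      assert (Hxzp : lineThrough il x z p).
      { apply (lt_eq il HX z p x z); auto; [apply lt_l| apply (lt_r il HX)]. }
      assert (Hnox : ~ lineThrough il o x p) by (intros H; apply nBp, (EB x); auto).
      destruct (Ha o x z p Hxzp Hnox) as [u [Hu D]].
      assert (Au : A u) by (apply (lt_line il HX o z A); auto).
      apply (finish il HX Hr P A B o p u u); auto.
      * intros ->; auto.
      * intros t [Ht Bt]. apply (D t). split; auto. apply (EB x); auto.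
      * apply lt_l.
    + apply (finish il HX Hr P A B o p z z); auto.
      * intros t [Ht Bt]. apply Hno; exists t; split; auto.
      * apply lt_l.
Qed.

Lemma fwd_hyperaffine {X} (il : (X -> Prop) -> Prop) (HX : is_liner X il) :
  hyper_Bolyai X il -> hyperaffine X il.
Proof.
  intros hB o x y p Hp Hnp.
  destruct (classic (lineThrough il o y p)) as [Hoy|Hnoy].
  { exists p. split; auto. intros z [Hz Hz']. apply lt_xx in Hz; subst; auto. }
  assert (Hxy : x <> y).
  { intros <-. apply lt_xx in Hp; subst. apply Hnp, (lt_r il HX). }
  assert (Hox : o <> x) by (intros <-; auto).
  assert (Hoy' : o <> y) by (intros <-; apply Hnp, (lt_sym il HX); auto).
  assert (Hn : nc il o x y).
  { split; auto. intros H. apply Hnp.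
    apply (lt_eq il HX o x x y); auto. apply (lt_r il HX). }
  pose proof (plane3 il HX o x y Hn) as hP.
  set (P := closure il (of_list [o;x;y])) in *.
  assert (Po : P o) by (apply sub_closure; simpl; tauto).
  assert (Px : P x) by (apply sub_closure; simpl; tauto).
  assert (Py : P y) by (apply sub_closure; simpl; tauto).
  destruct (line_ex il HX o y Hoy') as [A [hA EA]].
  destruct (line_ex il HX o x Hox) as [B [hB' EB]].
  assert (fP : flat il P) by apply closure_flat.
  destruct (hB P A B p hP hA hB') as [L [hL [Lp [[Par _] [c [[Lc Ac] _]]]]]].
  - intros z Hz. apply EA in Hz. revert Hz. apply flat_lt; auto.
  - intros z Hz. apply EB in Hz. revert Hz. apply flat_lt; auto.
  - split.
    + exists y. left. split; [apply EA, (lt_r il HX)|].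
      intros Hy. apply EB in Hy. apply Hn; auto.
    + exists o. split; [apply EA|apply EB]; apply lt_l.
  - revert Hp. apply flat_lt; auto.
  - intros H; apply Hnp, EB; auto.
  - exists c. split; [apply EA; auto|].
    assert (Hcp : c <> p) by (intros ->; apply Hnoy, EA; auto).
    intros z [Hz Hz'].
    assert (Lz : L z) by (apply (lt_line il HX c p L); auto).
    apply EB in Hz'.
    apply Hnp, EB. apply (meet_sub il HX L B z); auto.
Qed.

Lemma fwd_three_ranked {X} (il : (X -> Prop) -> Prop) (HX : is_liner X il) :
  hyper_Bolyai X il -> three_ranked X il.
Proof.
  intros hB A B fA fB sAB n hn rA rB z. split; [apply sAB|]. intros Bz.
  destruct rB as [[l [Hnd [Hl SB]]] rB'].
  destruct n as [|[|[|[|n]]]]; [| | | |lia].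
  - destruct l; [|discriminate]. exfalso.
    apply (SB z Bz (fun _ => False)); [intros ? ? [] |intros ? []].
  - destruct l as [|b [|]]; try discriminate.
    assert (HB1 : forall t, B t -> t = b).
    { intros t Bt. apply (lt_xx il b t). revert t Bt.
      intros t Bt; apply (closure_sub il _ (of_list [b])); [apply (lt_flat il HX)| |auto].
      intros s [<-|[]]; apply lt_l. }
    destruct rA as [_ rA].
    destruct (not_subset _ _ (rA [] ltac:(simpl; lia))) as [a [Aa _]].
    rewrite (HB1 z Bz), <- (HB1 a (sAB a Aa)); auto.
  - destruct l as [|b1 [|b2 [|]]]; try discriminate.
    assert (HB2 : forall t, B t -> lineThrough il b1 b2 t).
    { intros t Bt; apply (closure_sub il _ (of_list [b1;b2])); [apply (lt_flat il HX)| |auto].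
      intros s [<-|[<-|[]]]; [apply lt_l|apply (lt_r il HX)]. }
    destruct rA as [_ rA].
    destruct (not_subset _ _ (rA [] ltac:(simpl; lia))) as [a1 [A1 _]].
    destruct (not_subset _ _ (rA [a1] ltac:(simpl; lia))) as [a2 [A2 H2]].
    assert (Ha : a1 <> a2) by (intros <-; apply H2, sub_closure; simpl; auto).
    apply (flat_lt il A a1 a2); auto.
    apply (lt_eq il HX b1 b2 a1 a2); auto.
  - pose proof (rank3_nc il HX A rA) as [a1 [a2 [a3 [A1 [A2 [A3 [H12 H3]]]]]]].
    assert (H13 : a1 <> a3) by (intros <-; apply H3, lt_l).
    destruct (line_ex il HX a1 a2 H12) as [K1 [hK1 E1]].
    destruct (line_ex il HX a1 a3 H13) as [K2 [hK2 E2]].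
    assert (S2 : subset K2 A) by (intros t Ht; apply E2 in Ht; revert Ht; apply flat_lt; auto).
    destruct (classic (K2 z)) as [Kz|nKz]; [apply S2; auto|].
    assert (hP : plane il B) by (split; auto; split; [exists l; auto|]; apply rB').
    destruct (hB B K1 K2 z hP hK1 hK2) as [L [hL [Lz [[Par _] [c [[Lc Kc] _]]]]]]; auto.
    + intros t Ht; apply E1 in Ht; revert Ht; apply flat_lt; auto.
    + intros t Ht; apply sAB, S2; auto.
    + split.
      * exists a2. left. split; [apply E1, (lt_r il HX)|].
        intros Ht. apply E2 in Ht. apply H3.
        apply (lt_eq il HX a1 a3 a1 a2); auto; [apply lt_l | apply (lt_r il HX)].
      * exists a1. split; [apply E1|apply E2]; apply lt_l.
    + apply (closure_sub il A (fun t => t = c \/ K2 t)); auto.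
      * intros t [->|Ht]; auto. apply E1 in Kc; revert Kc; apply flat_lt; auto.
      * apply (Par c Lc); auto.
Qed.

Lemma two_pt {X} (il : (X -> Prop) -> Prop) (HX : is_liner X il) (hB : hyper_Bolyai X il)
  K a b p Pl : il K -> K a -> K b -> a <> b -> (forall z, K z -> z = a \/ z = b) ->
  ~ K p -> plane il Pl -> Pl a -> Pl b -> Pl p ->
  forall q, lineThrough il a p q -> q = a \/ q = p.
Proof.
  intros hK Ka Kb Hab HK2 nKp hP Pa Pb Pp q Hq.
  apply NNPP; intros Hn. apply not_or_and in Hn. destruct Hn as [Hqa Hqp].
  assert (fP : flat il Pl) by apply hP.
  assert (EK : forall z, K z <-> lineThrough il a b z)
    by (intros z; symmetry; apply (lt_line il HX); auto).
  assert (Hap : a <> p) by (intros ->; auto).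
  assert (Hbp : b <> p) by (intros ->; auto).
  destruct (line_ex il HX b p Hbp) as [M [hM EM]].
  assert (nMa : ~ M a).
  { intros Ma. apply EM in Ma. apply nKp, EK, (lt_sym il HX).
    apply (lt_eq il HX b p b a); auto; [apply lt_l|apply (lt_r il HX)]. }
  assert (nMq : ~ M q).
  { intros Mq. apply EM in Mq. apply nMa, EM.
    assert (E1 : forall z, lineThrough il q p z <-> lineThrough il a p z)
      by (apply (lt_eq il HX); auto; apply (lt_r il HX)).
    assert (E2 : forall z, lineThrough il q p z <-> lineThrough il b p z)
      by (apply (lt_eq il HX); auto; apply (lt_r il HX)).
    apply E2, E1, lt_l. }
  destruct (hB Pl K M q hP hK hM) as [L [hL [Lq [[Par _] [c [[Lc Kc] _]]]]]].
  - intros z Hz; apply EK in Hz; revert Hz; apply flat_lt; auto.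
  - intros z Hz; apply EM in Hz; revert Hz; apply flat_lt; auto.
  - split.
    + exists a. left. auto.
    + exists b. split; auto. apply EM, lt_l.
  - revert Hq; apply flat_lt; auto.
  - auto.
  - destruct (HK2 c Kc) as [->| ->].
    + assert (Lp : L p).
      { apply (lt_line il HX a q L); auto.
        apply (lt_eq il HX a p a q); auto; [apply lt_l|apply (lt_r il HX)]. }
      apply nMq. apply (meet_sub il HX L M p); auto. apply EM, (lt_r il HX).
    + apply nMq. apply (meet_sub il HX L M b); auto. apply EM, lt_l.
Qed.

Lemma fwd_three_long {X} (il : (X -> Prop) -> Prop) (HX : is_liner X il)
  (H3 : exists a b c : X, a <> b /\ a <> c /\ b <> c) :
  hyper_Bolyai X il -> three_long X il.
Proof.
  intros hB K hK.
  destruct (line_two il HX K hK) as [a [b [Hab [Ka Kb]]]].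
  destruct (classic (exists p, ~ K p)) as [[p nKp]|Hall].
  2:{ destruct H3 as [x [y [z [H1 [H2 H4]]]]].
      assert (HK : forall t, K t) by (intros t; apply NNPP; intros H; apply Hall; eauto).
      exists x, y, z; repeat split; auto. }
  apply NNPP; intros Hno.
  assert (HK2 : forall z, K z -> z = a \/ z = b).
  { intros z Kz. apply NNPP; intros H. apply not_or_and in H. destruct H.
    apply Hno. exists a, b, z. repeat split; auto. }
  assert (EK : forall z, K z <-> lineThrough il a b z)
    by (intros z; symmetry; apply (lt_line il HX); auto).
  assert (Hn : nc il a b p) by (split; auto; intros H; apply nKp, EK; auto).
  pose proof (plane3 il HX a b p Hn) as hP.
  set (P := closure il (of_list [a;b;p])) in *.
  assert (Pa : P a) by (apply sub_closure; simpl; tauto).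
  assert (Pb : P b) by (apply sub_closure; simpl; tauto).
  assert (Pp : P p) by (apply sub_closure; simpl; tauto).
  assert (HK2' : forall z, K z -> z = b \/ z = a) by (intros z Kz; destruct (HK2 z Kz); auto).
  pose proof (two_pt il HX hB K a b p P hK Ka Kb Hab HK2 nKp hP Pa Pb Pp) as Ca.
  pose proof (two_pt il HX hB K b a p P hK Kb Ka (not_eq_sym Hab) HK2' nKp hP Pb Pa Pp) as Cb.
  set (S := fun z => z = a \/ z = b \/ z = p).
  assert (fS : flat il S).
  { intros x y Sx Sy Hxy z Hz. unfold S in *.
    destruct Sx as [->|[->| ->]]; destruct Sy as [->|[->| ->]]; try congruence.
    - apply EK, HK2 in Hz. tauto.
    - apply Ca in Hz. tauto.
    - apply (lt_sym il HX), EK, HK2 in Hz. tauto.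
    - apply Cb in Hz. tauto.
    - apply (lt_sym il HX), Ca in Hz. tauto.
    - apply (lt_sym il HX), Cb in Hz. tauto. }
  assert (Hap : a <> p) by (intros ->; auto).
  destruct (line_ex il HX a p Hap) as [A [hA EA]].
  destruct (hB P A K p hP hA hK) as [L [hL [Lp [[Par _] _]]]].
  - intros z Hz; apply EA in Hz; revert Hz; apply flat_lt; auto; apply hP.
  - intros z Hz; apply EK in Hz; revert Hz; apply flat_lt; auto; apply hP.
  - split.
    + exists p. left. split; auto. apply EA, (lt_r il HX).
    + exists a. split; auto. apply EA, lt_l.
  - auto.
  - auto.
  - assert (SL : subset L S).
    { intros t Lt. apply (closure_sub il S (fun t => t = p \/ K t)); auto.
      - intros s [->|Ks]; unfold S; [tauto|]. destruct (HK2 s Ks); tauto.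
      - apply (Par p Lp); auto. }
    destruct (line_two il HX L hL) as [x [y [Hxy [Lx Ly]]]].
    assert (exists d, L d /\ d <> p) as [d [Ld Hdp]].
    { destruct (classic (x = p)) as [->|H]; eauto. }
    assert (Kd : K d).
    { destruct (SL d Ld) as [->|[->| ->]]; auto; congruence. }
    apply nKp. apply (meet_sub il HX L K d); auto.
Qed.

Theorem theorem6p9p5 (X : Type) (is_line : (X -> Prop) -> Prop)
  (HX : is_liner X is_line)
  (H3 : exists a b c : X, a <> b /\ a <> c /\ b <> c) :
  hyper_Bolyai X is_line <->
  three_long X is_line /\ hyperaffine X is_line /\ three_ranked X is_line.
Proof.
  split.
  - intros hB. split; [|split].
    + apply (fwd_three_long is_line HX H3 hB).
    + apply (fwd_hyperaffine is_line HX hB).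
    + apply (fwd_three_ranked is_line HX hB).
  - intros [Hl [Ha Hr]]. apply (backward is_line HX Hl Ha Hr).
Qed.
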